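(* Let $B\ge1$ be an integer and $\alpha=1/\sqrt{B}$. Consider a residual network with hidden states $\mathbf{h}^0=\mathbf{x}\in\mathbb{R}^d$ and $\mathbf{h}^{b+1}=\mathbf{h}^b+\alpha F_b(\mathbf{h}^b)$ for $b=0,\ldots,B-1$, where each $F_b:\mathbb{R}^d\to\mathbb{R}^d$ is differentiable, and let $\ell$ be a differentiable loss of the output $\mathbf{h}^B$. Write $\mathbf{g}^b=\frac{\partial\ell}{\partial\mathbf{h}^b}$, so that $\mathbf{g}^b=\mathbf{g}^{b+1}+\alpha J_b^T\mathbf{g}^{b+1}$ where $J_b$ is the Jacobian of $F_b$ at $\mathbf{h}^b$. Assume that for each $b$, $\lVert J_b^T\mathbf{u}\rVert=\lVert\mathbf{u}\rVert$ for every $\mathbf{u}\in\mathbb{R}^d$, and $\langle\mathbf{g}^{b+1},J_b^T\mathbf{g}^{b+1}\rangle=0$. Then there exists $c\in[\sqrt{2},\sqrt{e}]$ such that $\lVert\mathbf{g}^0\rVert=c\cdot\lVert\mathbf{g}^B\rVert$.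
   Context: $\langle\cdot,\cdot\rangle$ is the Euclidean dot product; gradients are column vectors, and $J_b^T\mathbf{g}^{b+1}$ is the vector-Jacobian product $\frac{\partial F_b}{\partial\mathbf{h}^b}\cdot\frac{\partial\ell}{\partial\mathbf{h}^{b+1}}$. *)

(* Defs.v *)
From HB Require Import structures.
From mathcomp Require Import all_boot all_order all_algebra.
From mathcomp Require Import all_classical all_reals all_analysis.
Set Implicit Arguments. Unset Strict Implicit. Unset Printing Implicit Defensive.
Import Order.TTheory GRing.Theory Num.Theory.
Import numFieldNormedType.Exports.
Local Open Scope ring_scope.

Section ResNet.
Context {R : realType} {d : nat}.

Definition dotv (u v : 'rV[R]_d) : R := \sum_(i < d) u 0 i * v 0 i.
Definition enorm (u : 'rV[R]_d) : R := Num.sqrt (dotv u u).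

Definition grad (f : 'rV[R]_d -> R) (p : 'rV[R]_d) : 'rV[R]_d :=
  \row_(i < d) ('d f p) (delta_mx 0 i : 'rV[R]_d).

Definition res_step (alpha : R) (F : nat -> 'rV[R]_d -> 'rV[R]_d) (b : nat)
  (h : 'rV[R]_d) : 'rV[R]_d := h + alpha *: F b h.

Fixpoint res_run (alpha : R) (F : nat -> 'rV[R]_d -> 'rV[R]_d) (b n : nat)
  (h : 'rV[R]_d) : 'rV[R]_d :=
  match n with
  | 0 => h
  | n'.+1 => res_run alpha F b.+1 n' (res_step alpha F b h)
  end.

Definition hidden (alpha : R) F (x : 'rV[R]_d) (b : nat) : 'rV[R]_d :=
  res_run alpha F 0 b x.

(* g^b = d loss / d h^b : gradient at h^b of  h |-> loss(blocks b..B-1 applied to h). *)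
Definition grad_hidden (alpha : R) F (loss : 'rV[R]_d -> R) (B : nat)
  (x : 'rV[R]_d) (b : nat) : 'rV[R]_d :=
  grad (fun h => loss (res_run alpha F b (B - b) h)) (hidden alpha F x b).

End ResNet.

(* Main.v *)
Require Import Defs.
From HB Require Import structures.
From mathcomp Require Import all_boot all_order all_algebra.
From mathcomp Require Import all_classical all_reals all_analysis.
Import Order.TTheory GRing.Theory Num.Theory.
Import numFieldNormedType.Exports.
Local Open Scope ring_scope.

Section S.
Context {R : realType} {d : nat}.
Implicit Types (u v w : 'rV[R]_d).

Lemma dotvC u v : dotv u v = dotv v u.
Proof. by rewrite /dotv; apply: eq_bigr => i _; rewrite mulrC. Qed.
Lemma dotvDl u v w : dotv (u + v) w = dotv u w + dotv v w.
Proof. by rewrite /dotv -big_split; apply: eq_bigr => i _; rewrite !mxE mulrDl. Qed.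
Lemma dotvZl (a : R) u w : dotv (a *: u) w = a * dotv u w.
Proof. by rewrite /dotv mulr_sumr; apply: eq_bigr => i _; rewrite !mxE mulrA. Qed.
Lemma dotvDr u v w : dotv w (u + v) = dotv w u + dotv w v.
Proof. by rewrite dotvC dotvDl !(dotvC w). Qed.
Lemma dotvZr (a : R) u w : dotv w (a *: u) = a * dotv w u.
Proof. by rewrite dotvC dotvZl dotvC. Qed.
Lemma dotv_ge0 u : 0 <= dotv u u.
Proof. by apply: sumr_ge0 => i _; rewrite -expr2 sqr_ge0. Qed.

Lemma d_grad (f : 'rV[R]_d -> R) p v : 'd f p v = dotv (grad f p) v.
Proof.
rewrite {1}(row_sum_delta v) linear_sum /dotv; apply: eq_bigr => i _.
by rewrite linearZ /= mxE mulrC.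
Qed.

End S.
Section G.
Context {R : realType} {V : normedModType R}.
Lemma gen_step_eq (alpha : R) (G : V -> V) :
  (fun h => h + alpha *: G h) = (id + alpha *: G).
Proof. by apply/funext. Qed.
Lemma gen_step_diff (alpha : R) (G : V -> V) p : differentiable G p ->
  differentiable (fun h => h + alpha *: G h) p.
Proof.
move=> Gd; rewrite gen_step_eq; apply: differentiableD.
  by case: (is_diff_id p).
exact: differentiableZ.
Qed.
Lemma gen_d_step (alpha : R) (G : V -> V) p v : differentiable G p ->
  'd (fun h => h + alpha *: G h) p v = v + alpha *: 'd G p v.
Proof.
move=> Gd.
have Gz := differentiableZ alpha Gd.
have did : differentiable (@id V) p by case: (is_diff_id p).
rewrite gen_step_eq (diffD did Gz).
have E1 := diffZ alpha Gd.
have E2 : 'd (@id V) p v = v by case: (is_diff_id p) => _ ->.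
transitivity ('d (@id V) p v + 'd (alpha *: G) p v); first by [].
by rewrite E2 E1.
Qed.
End G.
Section S2.
Context {R : realType} {d : nat}.
Lemma step_diff (alpha : R) (F : nat -> 'rV[R]_d -> 'rV[R]_d) b p : differentiable (F b) p ->
  differentiable (res_step alpha F b) p.
Proof. exact: gen_step_diff. Qed.
Lemma d_step (alpha : R) (F : nat -> 'rV[R]_d -> 'rV[R]_d) b p v : differentiable (F b) p ->
  'd (res_step alpha F b) p v = v + alpha *: (v *m 'J (F b) p).
Proof.
move=> Fd; rewrite /res_step (gen_d_step _ _ _ _ Fd).
by rewrite /jacobian mul_rV_lin1.
Qed.
End S2.

Section G2.
Context {R : realType} {V : normedModType R}.
Lemma gen_comp_step (alpha : R) (G : V -> V) (f : V -> R) p v :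
  differentiable G p -> differentiable f (p + alpha *: G p) ->
  'd (fun h => f (h + alpha *: G h)) p v = 'd f (p + alpha *: G p) (v + alpha *: 'd G p v).
Proof.
move=> Gd fd.
have E := diff_comp (gen_step_diff alpha G p Gd) fd.
rewrite -(gen_d_step alpha G p v Gd).
exact: (congr1 (fun k => k v) E).
Qed.
End G2.
Section S3.
Context {R : realType} {d : nat}.
Lemma grad_step (alpha : R) (F : nat -> 'rV[R]_d -> 'rV[R]_d) b (f : 'rV[R]_d -> R) p :
  differentiable (F b) p -> differentiable f (res_step alpha F b p) ->
  grad (f \o res_step alpha F b) p =
  grad f (res_step alpha F b p) +
    alpha *: (grad f (res_step alpha F b p) *m ('J (F b) p)^T).
Proof.
move=> Fd fd; apply/rowP => i.
have -> : grad f (res_step alpha F b p) = grad f (p + alpha *: F b p) by [].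
set G := grad f (p + alpha *: F b p).
rewrite !mxE.
have E := gen_comp_step alpha (F b) f p (delta_mx 0 i) Fd fd.
transitivity ('d f (p + alpha *: F b p) (delta_mx 0 i + alpha *: 'd (F b) p (delta_mx 0 i))).
  exact: E.
rewrite linearD linearZ /=; congr (_ + _ * _).
have -> : 'd (F b) p 'e_i = 'e_i *m 'J (F b) p by rewrite /jacobian mul_rV_lin1.
rewrite d_grad -/G /dotv; apply: eq_bigr => j _; rewrite !mxE.
congr (_ * _); rewrite (bigD1 i) //= big1 => [|k ki]; rewrite !mxE ?eqxx ?mul1r ?addr0 //.
by rewrite (negbTE ki) mul0r.
Qed.
Lemma res_run_last (alpha : R) (F : nat -> 'rV[R]_d -> 'rV[R]_d) n b h :
  res_run alpha F b n.+1 h = res_step alpha F (b + n) (res_run alpha F b n h).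
Proof.
elim: n b h => [|n IH] b h; first by rewrite addn0.
by have := IH b.+1 (res_step alpha F b h); rewrite addSnnS.
Qed.

Lemma run_diff (alpha : R) (F : nat -> 'rV[R]_d -> 'rV[R]_d) (B : nat) :
  (forall b, (b < B)%N -> forall y, differentiable (F b) y) ->
  forall n b, (b + n <= B)%N -> forall h, differentiable (res_run alpha F b n) h.
Proof.
move=> Fd; elim=> [|n IH] b bn h.
  by case: (is_diff_id h).
have -> : res_run alpha F b n.+1 = res_run alpha F b.+1 n \o res_step alpha F b by [].
apply: differentiable_comp.
  by apply: step_diff; apply: Fd; rewrite -addn1 (leq_trans _ bn) // leq_add2l.
by apply: IH; rewrite addSnnS.
Qed.
End S3.
From mathcomp Require Import lra.
Lemma bernoulli_le (R : realType) (n : nat) (x : R) : 0 <= x -> 1 + n%:R * x <= (1 + x) ^+ n.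
Proof.
move=> x0; elim: n => [|n IH]; first by rewrite mul0r addr0 expr0.
rewrite exprS.
apply: (le_trans _ (_ : (1 + x) * (1 + n%:R * x) <= _)); last by rewrite ler_pM2l ?ltr_pwDl.
have n0 : (0 : R) <= n%:R by rewrite ler0n.
rewrite -natr1; nra.
Qed.

Theorem theorem4 (R : realType) (d B : nat)
    (F : nat -> 'rV[R]_d -> 'rV[R]_d) (loss : 'rV[R]_d -> R) (x : 'rV[R]_d) :
  (1 <= B)%N ->
  let alpha : R := 1 / Num.sqrt (B%:R) in
  (forall b, (b < B)%N -> forall y, differentiable (F b) y) ->
  (forall y, differentiable loss y) ->
  let h := hidden alpha F x in
  let g := grad_hidden alpha F loss B x in
  (forall b, (b < B)%N -> forall u : 'rV[R]_d,
      enorm (u *m ('J (F b) (h b))^T) = enorm u) ->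
  (forall b, (b < B)%N ->
      dotv (g b.+1) (g b.+1 *m ('J (F b) (h b))^T) = 0) ->
  exists c : R, Num.sqrt 2 <= c <= Num.sqrt (expR 1) /\
    enorm (g 0%N) = c * enorm (g B).
Proof.
move=> B1 alpha Fd ld h g Jiso orth.
have hS b : h b.+1 = res_step alpha F b (h b).
  by rewrite /h /hidden res_run_last add0n.
have gS b : (b < B)%N ->
    g b = g b.+1 + alpha *: (g b.+1 *m ('J (F b) (h b))^T).
  move=> bB; rewrite /g /grad_hidden -(subnSK bB).
  have -> : (fun h0 => loss (res_run alpha F b (B - b.+1).+1 h0)) =
     (fun h0 => loss (res_run alpha F b.+1 (B - b.+1) h0)) \o res_step alpha F b by [].
  rewrite -/(hidden alpha F x b) -/(h b) grad_step; first by rewrite -hS.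
    exact: Fd.
  apply: (differentiable_comp (f := res_run alpha F b.+1 (B - b.+1))).
    by apply: (run_diff _ _ _ Fd); rewrite subnKC.
  exact: ld.
clearbody g h.
pose s : R := 1 + alpha ^+ 2.
have s0 : 0 <= s by rewrite addr_ge0 // sqr_ge0.
have dotS b : (b < B)%N -> dotv (g b) (g b) = s * dotv (g b.+1) (g b.+1).
  move=> bB; rewrite (gS b bB).
  set u := g b.+1; set w := u *m _.
  have uw : dotv u w = 0 by exact: orth.
  have ww : dotv w w = dotv u u.
    have := Jiso b bB u; rewrite /enorm -/w => E.
    by rewrite -(sqr_sqrtr (dotv_ge0 w)) -(sqr_sqrtr (dotv_ge0 u)) E.
  rewrite !dotvDl !dotvDr !dotvZl !dotvZr (dotvC w u) uw ww /s.
  by rewrite !mulr0 !addr0 mulrA -expr2 mulrDl mul1r add0r.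
have nS b : (b < B)%N -> enorm (g b) = Num.sqrt s * enorm (g b.+1).
  by move=> bB; rewrite /enorm (dotS b bB) (sqrtrM _ s0).
have main k : (k <= B)%N -> enorm (g (B - k)%N) = Num.sqrt s ^+ k * enorm (g B).
  elim: k => [|k IH] kB; first by rewrite subn0 expr0 mul1r.
  have lt : (B - k.+1 < B)%N by rewrite ltn_subrL; apply/andP; split => //; exact: leq_trans B1.
  by rewrite nS // subnSK // IH ?(ltnW kB) // exprS mulrA.
exists (Num.sqrt s ^+ B). split; last first. have M := main B (leqnn B). rewrite subnn in M. exact: M.
have sX n : Num.sqrt s ^+ n = Num.sqrt (s ^+ n).
  elim: n => [|n IH]; first by rewrite !expr0 sqrtr1.
  by rewrite !exprS IH sqrtrM.
have Bpos : (0 : R) < B%:R by rewrite ltr0n.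
have a2 : alpha ^+ 2 = B%:R^-1.
  by rewrite /alpha expr_div_n expr1n sqr_sqrtr ?ler0n // div1r.
rewrite sX !ler_sqrt ?exprn_ge0 ?expR_ge0 //; apply/andP; split.
  have Bi : (0:R) <= B%:R^-1 by rewrite invr_ge0 ler0n.
  have := @bernoulli_le _ B _ Bi.
  by rewrite mulfV ?gt_eqF // /s a2.
rewrite -[expR 1](_ : expR (B%:R * B%:R^-1) = _); last by rewrite mulfV ?gt_eqF.
rewrite expRM_natl /s a2 lerXn2r ?nnegrE ?expR_ge0 ?expR_ge1Dx //.
Qed.
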